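(* Let $R$ be a commutative ring, $A$ an $R$-algebra and $n,m$ positive integers. If $A^n$ can be generated by $m$ elements as an $R$-algebra, then $A^{n+1}$ can be generated by $m+1$ elements as an $R$-algebra. Consequently, if $\mathrm{gen}_m(A,R)$ is finite then the smallest number of generators of $A^{1+\mathrm{gen}_m(A,R)}$ as an $R$-algebra equals $m+1$.
   Context: Algebras are associative and unital; $A^n$ is the direct product of $n$ copies of $A$. $\mathrm{gen}_m(A,R)$ is the largest $k\in\mathbb Z\cup\{\infty\}$ such that $A^k$ can be generated by at most $m$ elements as an $R$-algebra. *)

(* Defs.v *)
From HB Require Import structures.
From mathcomp Require Import all_boot all_order all_algebra.
Set Implicit Arguments. Unset Strict Implicit. Unset Printing Implicit Defensive.
Import GRing.Theory.
Local Open Scope ring_scope.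

(* A^n, the direct product of n copies of A, is represented by the finite
   functions {ffun 'I_n -> A}, with MathComp's pointwise ring operations
   and pointwise scalar multiplication by R. *)

(* The R-subalgebra of A^n generated by the elements of s: the smallest
   subset containing s and 1, closed under +, *, and scaling by R
   (0 = 0 *: 1 and -x = (-1) *: x are then included). *)
Inductive in_subalg (R : comPzRingType) (A : algType R) (n : nat)
    (s : seq {ffun 'I_n -> A}) : {ffun 'I_n -> A} -> Prop :=
  | sa_gen x : x \in s -> in_subalg s x
  | sa_one : in_subalg s 1
  | sa_add x y : in_subalg s x -> in_subalg s y -> in_subalg s (x + y)
  | sa_mul x y : in_subalg s x -> in_subalg s y -> in_subalg s (x * y)
  | sa_scale (r : R) x : in_subalg s x -> in_subalg s (r *: x).

Definition gen_by (R : comPzRingType) (A : algType R) (n m : nat) : Prop :=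
  exists s : seq {ffun 'I_n -> A},
    (size s <= m)%N /\ forall x : {ffun 'I_n -> A}, in_subalg s x.

(* gen_m(A,R) is finite and equal to k: k is the largest natural number
   such that A^k is generated by at most m elements. *)
Definition gen_eq (R : comPzRingType) (A : algType R) (m k : nat) : Prop :=
  gen_by A k m /\ forall k' : nat, (k < k')%N -> ~ gen_by A k' m.

Definition min_gens (R : comPzRingType) (A : algType R) (n g : nat) : Prop :=
  gen_by A n g /\ forall g' : nat, (g' < g)%N -> ~ gen_by A n g'.

(* Main.v *)
Require Import Defs.
From HB Require Import structures.
From mathcomp Require Import all_boot all_order all_algebra.
Set Implicit Arguments. Unset Strict Implicit. Unset Printing Implicit Defensive.
Import GRing.Theory.
Local Open Scope ring_scope.

Section Ext.
Variables (R : comPzRingType) (A : algType R) (n : nat).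

Definition f1 (x : {ffun 'I_n.+1 -> A}) : {ffun 'I_n.+2 -> A} :=
  [ffun i : 'I_n.+2 => if (i < n.+1)%N then x (inord i) else 0].
Definition f2 (x : {ffun 'I_n.+1 -> A}) : {ffun 'I_n.+2 -> A} :=
  [ffun i : 'I_n.+2 => if (i < n.+1)%N then 0 else x ord_max].
Definition cc (x : {ffun 'I_n.+1 -> A}) : {ffun 'I_n.+2 -> A} :=
  [ffun i : 'I_n.+2 => if (i < n.+1)%N then x (inord i) else x ord_max].
Definition ee : {ffun 'I_n.+2 -> A} :=
  [ffun i : 'I_n.+2 => if (i < n.+1)%N then 0 else 1].

Lemma ext_ok (s : seq {ffun 'I_n.+1 -> A}) x :
  in_subalg s x ->
  in_subalg (ee :: map cc s) (f1 x) /\ in_subalg (ee :: map cc s) (f2 x).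
Proof.
have He : in_subalg (ee :: map cc s) ee by apply: sa_gen; rewrite inE eqxx.
elim=> {x}.
- move=> a Ha.
  have Hc : in_subalg (ee :: map cc s) (cc a).
    by apply: sa_gen; rewrite inE map_f ?orbT.
  split.
    have -> : f1 a = cc a + ((-1) *: ee) * cc a.
      apply/ffunP=> i; rewrite !ffunE; case: ifP => _.
        by rewrite scaler0 mul0r addr0.
      by rewrite scaleN1r mulN1r subrr.
    by apply: sa_add => //; apply: sa_mul => //; apply: sa_scale.
  have -> : f2 a = ee * cc a.
    apply/ffunP=> i; rewrite !ffunE; case: ifP => _; by rewrite ?mul0r ?mul1r.
  exact: sa_mul.
- split.
    have -> : f1 1 = 1 + ((-1) *: ee).
      apply/ffunP=> i; rewrite !ffunE; case: ifP => _.
        by rewrite scaler0 addr0.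
      by rewrite scaleN1r subrr.
    by apply: sa_add; [exact: sa_one | apply: sa_scale].
  have -> : f2 1 = ee.
    by apply/ffunP=> i; rewrite !ffunE; case: ifP.
  exact: He.
- move=> x y _ [H1 H2] _ [H3 H4]; split.
    have -> : f1 (x + y) = f1 x + f1 y.
      by apply/ffunP=> i; rewrite !ffunE; case: ifP; rewrite ?addr0 ?ffunE.
    exact: sa_add.
  have -> : f2 (x + y) = f2 x + f2 y.
    by apply/ffunP=> i; rewrite !ffunE; case: ifP; rewrite ?addr0 ?ffunE.
  exact: sa_add.
- move=> x y _ [H1 H2] _ [H3 H4]; split.
    have -> : f1 (x * y) = f1 x * f1 y.
      by apply/ffunP=> i; rewrite !ffunE; case: ifP; rewrite ?mulr0 ?ffunE.
    exact: sa_mul.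
  have -> : f2 (x * y) = f2 x * f2 y.
    by apply/ffunP=> i; rewrite !ffunE; case: ifP; rewrite ?mulr0 ?ffunE.
  exact: sa_mul.
- move=> r x _ [H1 H2]; split.
    have -> : f1 (r *: x) = r *: f1 x.
      by apply/ffunP=> i; rewrite !ffunE; case: ifP; rewrite ?scaler0 ?ffunE.
    exact: sa_scale.
  have -> : f2 (r *: x) = r *: f2 x.
    by apply/ffunP=> i; rewrite !ffunE; case: ifP; rewrite ?scaler0 ?ffunE.
  exact: sa_scale.
Qed.

Lemma ext_gen m : gen_by A n.+1 m -> gen_by A n.+2 m.+1.
Proof.
case=> s [Hs Hall]; exists (ee :: map cc s); split; first by rewrite /= size_map.
move=> z.
have [H1 _] := ext_ok (Hall [ffun i : 'I_n.+1 => z (widen_ord (leqnSn _) i)]).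
have [_ H2] := ext_ok (Hall [ffun i : 'I_n.+1 => z ord_max]).
have -> : z = f1 [ffun i : 'I_n.+1 => z (widen_ord (leqnSn _) i)]
              + f2 [ffun i : 'I_n.+1 => z ord_max].
  apply/ffunP=> i; rewrite !ffunE; case: ifP => Hi; rewrite ?ffunE.
    rewrite addr0; congr (z _); apply/val_inj; rewrite /= inordK //.
  rewrite add0r; congr (z _); apply/val_inj => /=.
  by apply/eqP; rewrite eqn_leq -ltnS ltn_ord leqNgt Hi.
exact: sa_add.
Qed.
End Ext.

Theorem mainTheorem8 (R : comPzRingType) (A : algType R) (m : nat) :
  (0 < m)%N ->
  (forall n : nat, (0 < n)%N -> gen_by A n m -> gen_by A n.+1 m.+1) /\
  (forall k : nat, (0 < k)%N -> gen_eq A m k -> min_gens A k.+1 m.+1).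
Proof.
move=> _.
have P1 : forall n : nat, (0 < n)%N -> gen_by A n m -> gen_by A n.+1 m.+1.
  by case=> // n _; apply: ext_gen.
split=> // k k0 [Hk Hmax]; split; first exact: P1.
move=> g' Hg [s [Hs Hall]]; apply: (Hmax k.+1 (ltnSn k)).
by exists s; split=> //; apply: leq_trans Hs _.
Qed.
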